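(* Let $m>1$, $N\ge2$, $\chi>0$, and let $k\ge2$ be an integer with $\chi<C_k$. Let $T\in(0,\infty)$ and let $X\in C^0([0,T),\mathcal R^N)$ be a solution of the gradient flow system on $[0,T)$. Then any weak blow-up set of $X$ at time $T$ containing at least two indices contains at least $k+1$ indices.
   Context: $\mathcal R^N=\{X\in\mathbb R^N: X_1<\dots<X_N,\ \sum_iX_i=0\}$. For $p\ge2$, $C_p$ is defined by $\frac1{C_p}=\max_{X\in\mathcal R^p}\frac{\sum_{1\le i\ne j\le p}|X_j-X_i|^{1-m}}{\sum_{i=1}^{p-1}(X_{i+1}-X_i)^{1-m}}$. Gradient flow system: for $i=1,\dots,N$, $\dot X_i=-(X_{i+1}-X_i)^{-m}+(X_i-X_{i-1})^{-m}+2\chi\sum_{j\ne i}\mathrm{sign}(j-i)|X_j-X_i|^{-m}$, the first term absent for $i=N$ and the second for $i=1$. A set $\mathcal I=[l,r]$ of consecutive integers in $[1,N]$ weakly blows up at time $T$ if $\liminf_{t\to T^-}(X_{i+1}(t)-X_i(t))=0$ for every $i\in[l,r-1]$; a weak blow-up set is such a set that is maximal for inclusion. *)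

(* Defs.v *)
From Stdlib Require Import Reals Lra Lia.
From Coquelicot Require Import Coquelicot.
Open Scope R_scope.

(* Vectors of R^p are represented as functions nat -> R, indexed 1..p (as in the paper). *)

Fixpoint sum1 (n : nat) (f : nat -> R) : R :=
  match n with
  | O => 0
  | S n' => sum1 n' f + f (S n')
  end.

Definition in_Rcal (p : nat) (X : nat -> R) : Prop :=
  (forall i : nat, (1 <= i)%nat -> (i < p)%nat -> X i < X (S i)) /\
  sum1 p X = 0.

Definition C_num (m : R) (p : nat) (X : nat -> R) : R :=
  sum1 p (fun i => sum1 p (fun j =>
    if Nat.eq_dec i j then 0 else Rpower (Rabs (X j - X i)) (1 - m))).

Definition C_den (m : R) (p : nat) (X : nat -> R) : R :=
  sum1 (p - 1) (fun i => Rpower (X (S i) - X i) (1 - m)).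

(* 1 / C_p = max over R^p of C_num / C_den (taken as a supremum) *)
Definition C_inv (m : R) (p : nat) : Rbar :=
  Lub_Rbar (fun r => exists X, in_Rcal p X /\ r = C_num m p X / C_den m p X).

Definition C_const (m : R) (p : nat) : R := / real (C_inv m p).

Definition flow_rhs (m chi : R) (N : nat) (Y : nat -> R) (i : nat) : R :=
  (if Nat.eq_dec i N then 0 else - Rpower (Y (S i) - Y i) (- m))
  + (if Nat.eq_dec i 1 then 0 else Rpower (Y i - Y (pred i)) (- m))
  + 2 * chi * sum1 N (fun j =>
      if Nat.ltb i j then Rpower (Rabs (Y j - Y i)) (- m)
      else if Nat.ltb j i then - Rpower (Rabs (Y j - Y i)) (- m)
      else 0).

Definition is_solution (m chi : R) (N : nat) (T : R) (X : R -> nat -> R) : Prop :=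
  (forall t, 0 <= t < T -> in_Rcal N (X t)) /\
  (forall i, (1 <= i <= N)%nat ->
     continuous_on (fun t => 0 <= t < T) (fun t => X t i)) /\
  (forall i t, (1 <= i <= N)%nat -> 0 < t < T ->
     is_derive (fun s => X s i) t (flow_rhs m chi N (X t) i)).

Definition liminf_left_eq0 (g : R -> R) (T : R) : Prop :=
  (* liminf <= 0 *)
  (forall eps delta, 0 < eps -> 0 < delta ->
     exists t, 0 <= t < T /\ T - delta < t /\ g t < eps) /\
  (* liminf >= 0 *)
  (forall eps, 0 < eps -> exists delta, 0 < delta /\
     forall t, 0 <= t < T -> T - delta < t -> - eps < g t).

Definition weakly_blows_up (N : nat) (X : R -> nat -> R) (T : R) (l r : nat) : Prop :=
  (1 <= l)%nat /\ (l <= r)%nat /\ (r <= N)%nat /\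
  forall i, (l <= i)%nat -> (i < r)%nat ->
    liminf_left_eq0 (fun t => X t (S i) - X t i) T.

Definition weak_blowup_set (N : nat) (X : R -> nat -> R) (T : R) (l r : nat) : Prop :=
  weakly_blows_up N X T l r /\
  forall l' r', weakly_blows_up N X T l' r' -> (l' <= l)%nat -> (r <= r')%nat ->
    l' = l /\ r' = r.

(* Main.v *)
Require Import Defs.
From Stdlib Require Import Reals.
From Coquelicot Require Import Coquelicot.
From Stdlib Require Import Lra Lia Psatz Classical.
Open Scope R_scope.

Lemma sum1_ext n f g : (forall i, (1 <= i <= n)%nat -> f i = g i) -> sum1 n f = sum1 n g.
Proof. induction n; intros H; simpl; auto. rewrite IHn by (intros; apply H; lia). rewrite H by lia. auto. Qed.

Lemma sum1_plus n f g : sum1 n (fun i => f i + g i) = sum1 n f + sum1 n g.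
Proof. induction n; simpl; [ring|]. rewrite IHn; ring. Qed.

Lemma sum1_minus n f g : sum1 n (fun i => f i - g i) = sum1 n f - sum1 n g.
Proof. induction n; simpl; [ring|]. rewrite IHn; ring. Qed.

Lemma sum1_scal n c f : sum1 n (fun i => c * f i) = c * sum1 n f.
Proof. induction n; simpl; [ring|]. rewrite IHn; ring. Qed.

Lemma sum1_const n c : sum1 n (fun _ => c) = INR n * c.
Proof. induction n; simpl sum1; [simpl; ring|]. rewrite IHn, S_INR; ring. Qed.

Lemma sum1_shift n f : sum1 (S n) f = f 1%nat + sum1 n (fun i => f (S i)).
Proof. induction n; simpl sum1; [ring|]. simpl sum1 in IHn. rewrite IHn. ring. Qed.

Lemma sum1_split a b f : sum1 (a + b) f = sum1 a f + sum1 b (fun i => f (a + i)%nat).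
Proof. induction b; simpl sum1. rewrite Nat.add_0_r; ring.
  rewrite Nat.add_succ_r; simpl sum1. rewrite IHb. ring. Qed.

Lemma sum1_swap n m f : sum1 n (fun i => sum1 m (fun j => f i j)) = sum1 m (fun j => sum1 n (fun i => f i j)).
Proof. induction n; simpl sum1.
  rewrite sum1_const; ring.
  rewrite IHn, <- sum1_plus. auto. Qed.

Lemma sum1_le n f g : (forall i, (1 <= i <= n)%nat -> f i <= g i) -> sum1 n f <= sum1 n g.
Proof. induction n; intros H; simpl; [lra|]. assert (H1 := H (S n) ltac:(lia)).
  assert (sum1 n f <= sum1 n g) by (apply IHn; intros; apply H; lia). lra. Qed.

Lemma sum1_nonneg n f : (forall i, (1 <= i <= n)%nat -> 0 <= f i) -> 0 <= sum1 n f.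
Proof. intros H. rewrite <- (Rmult_0_r (INR n)), <- sum1_const. apply sum1_le; auto. Qed.

Lemma sum1_abs_le n f M : (forall i, (1 <= i <= n)%nat -> Rabs (f i) <= M) -> Rabs (sum1 n f) <= INR n * M.
Proof. induction n; intros H; simpl sum1. rewrite Rabs_R0; simpl; lra.
  rewrite S_INR. eapply Rle_trans; [apply Rabs_triang|].
  assert (H1 := H (S n) ltac:(lia)).
  assert (Rabs (sum1 n f) <= INR n * M) by (apply IHn; intros; apply H; lia). lra. Qed.

Lemma sum1_mono_n n d f : (forall i, (1 <= i <= n + d)%nat -> 0 <= f i) -> sum1 n f <= sum1 (n + d) f.
Proof. intros H. rewrite sum1_split. assert (0 <= sum1 d (fun i => f (n + i)%nat)).
  apply sum1_nonneg; intros; apply H; lia. lra. Qed.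

Lemma is_derive_sum1 n (f : R -> nat -> R) t df :
  (forall i, (1 <= i <= n)%nat -> is_derive (fun s => f s i) t (df i)) ->
  is_derive (fun s => sum1 n (f s)) t (sum1 n df).
Proof. induction n; intros H; simpl.
  apply (is_derive_const (V:=R_NormedModule)).
  apply (is_derive_plus (V:=R_NormedModule) (fun s => sum1 n (f s)) (fun s => f s (S n))).
  apply IHn; intros; apply H; lia. apply H; lia. Qed.

Lemma Rpower_pos x y : 0 < Rpower x y.
Proof. unfold Rpower; apply exp_pos. Qed.

Lemma Rpower_antimono a b y : y <= 0 -> 0 < a <= b -> Rpower b y <= Rpower a y.
Proof. intros Hy [Ha Hab]. unfold Rpower. destruct (Rle_lt_or_eq_dec _ _ Hab) as [h|h].
  2:{ subst; lra. }
  assert (ln a < ln b) by (apply ln_increasing; lra).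
  destruct (Rle_lt_or_eq_dec _ _ Hy) as [h2|h2]. 2:{ subst; rewrite !Rmult_0_l; lra. }
  left; apply exp_increasing; nra. Qed.

Lemma Rpower_antimono_strict a b y : y < 0 -> 0 < a < b -> Rpower b y < Rpower a y.
Proof. intros Hy [Ha Hab]. unfold Rpower.
  assert (ln a < ln b) by (apply ln_increasing; lra). apply exp_increasing; nra. Qed.

Lemma Rpower_exp x y : Rpower (exp x) y = exp (y * x).
Proof. unfold Rpower. rewrite ln_exp. auto. Qed.

Lemma is_derive_Rpower_comp (u : R -> R) t du a : is_derive u t du -> 0 < u t ->
  is_derive (fun s => Rpower (u s) a) t (a * Rpower (u t) (a - 1) * du).
Proof. intros Hu Hp.
  assert (H := is_derive_comp (fun x => Rpower x a) u t _ _ (proj2 (is_derive_Reals _ _ _) (derivable_pt_lim_power _ a Hp)) Hu).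
  replace (a * Rpower (u t) (a - 1) * du) with (scal du (a * Rpower (u t) (a - 1)))
    by (unfold scal; simpl; unfold mult; simpl; ring).
  exact H.
Qed.


Definition incr (n : nat) (Z : nat -> R) := forall i, (1 <= i)%nat -> (i < n)%nat -> Z i < Z (S i).

Lemma incr_le_aux n Z : incr n Z -> forall d a, (1 <= a)%nat -> (a + d <= n)%nat -> Z a <= Z (a + d)%nat.
Proof. intros H; induction d; intros a Ha Hn. rewrite Nat.add_0_r; lra.
  rewrite Nat.add_succ_r. assert (Z a <= Z (a+d)%nat) by (apply IHd; lia).
  assert (Z (a+d)%nat < Z (S (a+d))) by (apply H; lia). lra. Qed.

Lemma incr_le n Z a b : incr n Z -> (1 <= a)%nat -> (a <= b)%nat -> (b <= n)%nat -> Z a <= Z b.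
Proof. intros H ? ? ?. replace b with (a + (b - a))%nat by lia. apply (incr_le_aux n); auto; lia. Qed.

Lemma incr_lt n Z a b : incr n Z -> (1 <= a)%nat -> (a < b)%nat -> (b <= n)%nat -> Z a < Z b.
Proof. intros H ? ? ?. assert (Z a < Z (S a)) by (apply H; lia).
  assert (Z (S a) <= Z b) by (apply (incr_le n); auto; lia). lra. Qed.

Lemma C_num_shift m n Z a : C_num m n (fun i => Z i + a) = C_num m n Z.
Proof. unfold C_num. apply sum1_ext; intros; apply sum1_ext; intros.
  destruct Nat.eq_dec; auto. replace (Z i0 + a - (Z i + a)) with (Z i0 - Z i) by ring. auto. Qed.

Lemma C_den_shift m n Z a : C_den m n (fun i => Z i + a) = C_den m n Z.
Proof. unfold C_den. apply sum1_ext; intros.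
  replace (Z (S i) + a - (Z i + a)) with (Z (S i) - Z i) by ring. auto. Qed.

Lemma C_den_pos m n Z : (2 <= n)%nat -> 0 < C_den m n Z.
Proof. intros H. unfold C_den. replace (n - 1)%nat with (S (n - 2)) by lia.
  rewrite sum1_shift. assert (0 <= sum1 (n-2) (fun i => Rpower (Z (S (S i)) - Z (S i)) (1 - m))).
  apply sum1_nonneg; intros; left; apply Rpower_pos. pose proof (Rpower_pos (Z 2%nat - Z 1%nat) (1-m)). lra. Qed.

Lemma C_num_nonneg_term m (Z : nat -> R) i j : 0 <= (if Nat.eq_dec i j then 0 else Rpower (Rabs (Z j - Z i)) (1 - m)).
Proof. destruct Nat.eq_dec; [lra| left; apply Rpower_pos]. Qed.

Lemma key_k m k c Z : C_inv m k = Finite c -> (2 <= k)%nat -> incr k Z -> C_num m k Z <= c * C_den m k Z.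
Proof. intros Hc Hk HZ.
  set (s := sum1 k Z). set (Z' := fun i => Z i + (- s / INR k)).
  assert (Hin : in_Rcal k Z').
  { split. intros i H1 H2; unfold Z'. assert (Z i < Z (S i)) by (apply HZ; lia). lra.
    unfold Z'. rewrite sum1_plus, sum1_const. fold s.
    assert (0 < INR k) by (apply lt_0_INR; lia). field. lra. }
  assert (Hub := proj1 (Lub_Rbar_correct (fun r => exists X, in_Rcal k X /\ r = C_num m k X / C_den m k X))).
  fold (C_inv m k) in Hub. rewrite Hc in Hub.
  assert (H := Hub _ (ex_intro _ Z' (conj Hin eq_refl))). simpl in H.
  unfold Z' in H. rewrite C_num_shift, C_den_shift in H.
  assert (0 < C_den m k Z) by (apply C_den_pos; auto).
  apply (Rmult_le_compat_r (C_den m k Z)) in H; [|lra].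
  unfold Rdiv in H. rewrite Rmult_assoc, Rinv_l in H; lra. Qed.

Lemma static_ineq m k p c Y : 1 < m -> C_inv m k = Finite c -> 0 < c -> (2 <= p)%nat -> (p <= k)%nat ->
  incr p Y -> C_num m p Y <= c * C_den m p Y.
Proof. intros Hm1 Hc c0 Hp Hpk HY.
  destruct p as [|q]; [lia|].
  set (d := (k - S q)%nat). assert (Hk : k = (S q + d)%nat) by lia.
  set (Zf := fun L i => if Nat.leb i (S q) then Y i else Y (S q) + INR (i - S q) * L).
  assert (H : forall L, 0 < L -> C_num m (S q) Y <= c * (C_den m (S q) Y + INR d * Rpower L (1 - m))).
  { intros L HL.
    assert (Hinc : incr k (Zf L)).
    { intros i H1 H2. unfold Zf. destruct (Nat.leb_spec i (S q)); destruct (Nat.leb_spec (S i) (S q)).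
      - apply HY; lia.
      - assert (i = S q) by lia. subst i. replace (S (S q) - S q)%nat with 1%nat by lia. simpl. lra.
      - lia.
      - replace (S i - S q)%nat with (S (i - S q)) by lia. rewrite S_INR. nra. }
    assert (Hkey := key_k m k c (Zf L) Hc ltac:(lia) Hinc).
    assert (Hn : C_num m (S q) Y <= C_num m k (Zf L)).
    { unfold C_num. rewrite Hk.
      apply Rle_trans with (sum1 (S q) (fun i => sum1 (S q + d) (fun j =>
          if Nat.eq_dec i j then 0 else Rpower (Rabs (Zf L j - Zf L i)) (1 - m)))).
      apply sum1_le; intros i Hi.
      apply Rle_trans with (sum1 (S q) (fun j =>
          if Nat.eq_dec i j then 0 else Rpower (Rabs (Zf L j - Zf L i)) (1 - m))).
      right; apply sum1_ext; intros j Hj. unfold Zf.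
      destruct (Nat.leb_spec i (S q)); [|lia]. destruct (Nat.leb_spec j (S q)); [|lia]. auto.
      apply sum1_mono_n; intros; apply C_num_nonneg_term.
      apply sum1_mono_n; intros; apply sum1_nonneg; intros; apply C_num_nonneg_term. }
    assert (Hd : C_den m k (Zf L) = C_den m (S q) Y + INR d * Rpower L (1 - m)).
    { unfold C_den. rewrite Hk. replace (S q + d - 1)%nat with (q + d)%nat by lia.
      replace (S q - 1)%nat with q by lia. rewrite sum1_split. f_equal.
      - apply sum1_ext; intros i Hi. unfold Zf.
        destruct (Nat.leb_spec i (S q)); [|lia]. destruct (Nat.leb_spec (S i) (S q)); [|lia]. auto.
      - rewrite <- sum1_const. apply sum1_ext; intros i Hi. unfold Zf.
        destruct (Nat.leb_spec (S (q + i)) (S q)); [lia|].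
        replace (S (q + i) - S q)%nat with i by lia.
        destruct (Nat.leb_spec (q + i) (S q)).
        + assert (i = 1%nat) by lia. subst i. replace (q + 1)%nat with (S q) by lia. simpl.
          f_equal. ring.
        + replace (q + i - S q)%nat with (i - 1)%nat by lia. rewrite minus_INR by lia. simpl.
          f_equal. ring. }
    rewrite <- Hd. lra. }
  destruct (Rle_or_lt (C_num m (S q) Y) (c * C_den m (S q) Y)) as [h|h]; auto.
  exfalso.
  assert (Hd0 : 0 <= INR d) by apply pos_INR.
  set (eps := (C_num m (S q) Y - c * C_den m (S q) Y) / (c * (INR d + 1))).
  assert (He : 0 < eps) by (unfold eps; apply Rdiv_lt_0_compat; nra).
  assert (Hm : 1 - m <> 0) by lra.
  assert (HL := H (exp (ln eps / (1 - m))) (exp_pos _)).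
  rewrite Rpower_exp in HL. replace ((1 - m) * (ln eps / (1 - m))) with (ln eps) in HL by (field; auto).
  rewrite exp_ln in HL by auto.
  assert (c * (INR d * eps) * (INR d + 1) = (C_num m (S q) Y - c * C_den m (S q) Y) * INR d).
  { unfold eps. field. lra. }
  nra.
Qed.


Definition Pt m (Z : nat -> R) i j :=
  if Nat.ltb i j then Rpower (Z j - Z i) (1 - m)
  else if Nat.ltb j i then Rpower (Z i - Z j) (1 - m) else 0.

Definition E2f m chi q (Z : nat -> R) :=
  sum1 q (fun i => Rpower (Z (S i) - Z i) (1 - m)) - chi * sum1 (S q) (fun i => sum1 (S q) (fun j => Pt m Z i j)).

Lemma E2f_eq m chi q Z : incr (S q) Z -> C_den m (S q) Z - chi * C_num m (S q) Z = E2f m chi q Z.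
Proof. intros HZ. unfold E2f, C_den, C_num. replace (S q - 1)%nat with q by lia. f_equal. f_equal.
  apply sum1_ext; intros i Hi; apply sum1_ext; intros j Hj. unfold Pt.
  destruct Nat.eq_dec as [e|e]. subst j. rewrite Nat.ltb_irrefl. auto.
  destruct (Nat.ltb_spec i j).
  - rewrite Rabs_right; auto. assert (Z i < Z j) by (apply (incr_lt (S q)); auto; lia). lra.
  - destruct (Nat.ltb_spec j i); [|lia].
    rewrite Rabs_left. f_equal; ring. assert (Z j < Z i) by (apply (incr_lt (S q)); auto; lia). lra.
Qed.

Definition sfun m (Z : nat -> R) i j :=
  if Nat.ltb i j then Rpower (Rabs (Z j - Z i)) (- m)
  else if Nat.ltb j i then - Rpower (Rabs (Z j - Z i)) (- m) else 0.

Lemma sfun_anti m Z i j : sfun m Z j i = - sfun m Z i j.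
Proof. unfold sfun. rewrite (Rabs_minus_sym (Z i)).
  destruct (Nat.ltb_spec i j); destruct (Nat.ltb_spec j i); try lia; ring. Qed.

Definition dPt m (Z V : nat -> R) i j :=
  if Nat.ltb i j then (1 - m) * Rpower (Z j - Z i) (- m) * (V j - V i)
  else if Nat.ltb j i then (1 - m) * Rpower (Z i - Z j) (- m) * (V i - V j) else 0.

Lemma dN_alg m p Z V : incr p Z ->
  sum1 p (fun i => sum1 p (fun j => dPt m Z V i j)) =
  - 2 * (1 - m) * sum1 p (fun i => V i * sum1 p (fun j => sfun m Z i j)).
Proof. intros HZ.
  transitivity (sum1 p (fun i => sum1 p (fun j => (1 - m) * (sfun m Z i j * V j) - (1 - m) * (sfun m Z i j * V i)))).
  { apply sum1_ext; intros i Hi; apply sum1_ext; intros j Hj. unfold dPt, sfun.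
    destruct (Nat.ltb_spec i j).
    - rewrite Rabs_right. ring. assert (Z i < Z j) by (apply (incr_lt p); auto; lia). lra.
    - destruct (Nat.ltb_spec j i); [|ring].
      rewrite Rabs_left. replace (- (Z j - Z i)) with (Z i - Z j) by ring. ring.
      assert (Z j < Z i) by (apply (incr_lt p); auto; lia). lra. }
  rewrite (sum1_ext p _ (fun i => (1 - m) * sum1 p (fun j => sfun m Z i j * V j) - (1 - m) * (V i * sum1 p (fun j => sfun m Z i j)))).
  2:{ intros i Hi. rewrite sum1_minus, !sum1_scal. f_equal. f_equal. rewrite <- sum1_scal.
      apply sum1_ext; intros; ring. }
  rewrite sum1_minus, !sum1_scal. rewrite sum1_swap.
  rewrite (sum1_ext p (fun j => sum1 p (fun i => sfun m Z i j * V j)) (fun j => - (V j * sum1 p (fun i => sfun m Z j i)))).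
  2:{ intros j Hj. rewrite <- sum1_scal. rewrite <- (Rmult_1_l (sum1 p _)) at 1.
      replace (- _) with ((-1) * sum1 p (fun i => V j * sfun m Z j i)) by ring.
      rewrite <- !sum1_scal. apply sum1_ext; intros. rewrite (sfun_anti m Z i j). ring. }
  rewrite <- (Rmult_1_l (sum1 p (fun j => - _))).
  replace (1 * sum1 p (fun j => - (V j * sum1 p (fun i => sfun m Z j i)))) with
     ((-1) * sum1 p (fun j => V j * sum1 p (fun i => sfun m Z j i))).
  ring. rewrite <- !sum1_scal. apply sum1_ext; intros; ring.
Qed.

Lemma sum1_last n f : sum1 (S n) f = sum1 n f + f (S n).
Proof. reflexivity. Qed.

Lemma dD_alg m q Z V : sum1 q (fun i => (1-m) * Rpower (Z (S i) - Z i) (-m) * (V (S i) - V i)) =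
 (1-m) * sum1 (S q) (fun i => ((if Nat.eq_dec i (S q) then 0 else - Rpower (Z (S i) - Z i) (- m))
   + (if Nat.eq_dec i 1 then 0 else Rpower (Z i - Z (pred i)) (- m))) * V i).
Proof.
  rewrite (sum1_ext (S q) _ (fun i => (if Nat.eq_dec i (S q) then 0 else - Rpower (Z (S i) - Z i) (- m)) * V i
      + (if Nat.eq_dec i 1 then 0 else Rpower (Z i - Z (pred i)) (- m)) * V i)) by (intros; ring).
  rewrite sum1_plus.
  rewrite (sum1_shift q (fun i => (if Nat.eq_dec i 1 then 0 else Rpower (Z i - Z (pred i)) (- m)) * V i)).
  rewrite (sum1_last q (fun i => (if Nat.eq_dec i (S q) then 0 else - Rpower (Z (S i) - Z i) (- m)) * V i)).
  destruct (Nat.eq_dec (S q) (S q)); [|lia]. destruct (Nat.eq_dec 1 1); [|lia].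
  rewrite (sum1_ext q (fun i => (if Nat.eq_dec i (S q) then 0 else - Rpower (Z (S i) - Z i) (- m)) * V i)
     (fun i => - (Rpower (Z (S i) - Z i) (- m) * V i))).
  2:{ intros i Hi. destruct Nat.eq_dec; [lia|]. ring. }
  rewrite (sum1_ext q (fun i => (if Nat.eq_dec (S i) 1 then 0 else Rpower (Z (S i) - Z (pred (S i))) (- m)) * V (S i))
     (fun i => Rpower (Z (S i) - Z i) (- m) * V (S i))).
  2:{ intros i Hi. destruct Nat.eq_dec; [lia|]. simpl. auto. }
  replace (sum1 q (fun i => - (Rpower (Z (S i) - Z i) (- m) * V i))) with
    ((-1) * sum1 q (fun i => Rpower (Z (S i) - Z i) (- m) * V i))
    by (rewrite <- sum1_scal; apply sum1_ext; intros; ring).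
  rewrite (sum1_ext q _ (fun i => (1-m) * (Rpower (Z (S i) - Z i) (- m) * V (S i) - Rpower (Z (S i) - Z i) (- m) * V i)))
    by (intros; ring).
  rewrite sum1_scal, sum1_minus. ring. Qed.

Lemma total_alg m chi q Z V : incr (S q) Z ->
  sum1 q (fun i => (1-m) * Rpower (Z (S i) - Z i) (-m) * (V (S i) - V i))
  - chi * sum1 (S q) (fun i => sum1 (S q) (fun j => dPt m Z V i j))
  = (1 - m) * sum1 (S q) (fun i => flow_rhs m chi (S q) Z i * V i).
Proof. intros HZ. rewrite dN_alg by auto. rewrite dD_alg.
  rewrite (sum1_ext (S q) (fun i => flow_rhs m chi (S q) Z i * V i) (fun i =>
     ((if Nat.eq_dec i (S q) then 0 else - Rpower (Z (S i) - Z i) (- m))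
      + (if Nat.eq_dec i 1 then 0 else Rpower (Z i - Z (pred i)) (- m))) * V i
     + 2 * chi * (V i * sum1 (S q) (fun j => sfun m Z i j)))).
  2:{ intros i Hi. unfold flow_rhs, sfun. ring. }
  rewrite sum1_plus, sum1_scal. ring. Qed.

Lemma is_derive_diff (f g : R -> R) t a b : is_derive f t a -> is_derive g t b ->
  is_derive (fun s => f s - g s) t (a - b).
Proof. intros Ha Hb. exact (is_derive_minus (V:=R_NormedModule) f g t a b Ha Hb). Qed.

Lemma is_derive_Rp_diff (Y : R -> nat -> R) V t i j m :
  is_derive (fun s => Y s j) t (V j) -> is_derive (fun s => Y s i) t (V i) -> Y t i < Y t j ->
  is_derive (fun s => Rpower (Y s j - Y s i) (1 - m)) t ((1 - m) * Rpower (Y t j - Y t i) (- m) * (V j - V i)).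
Proof. intros Hj Hi Hlt. replace (- m) with (1 - m - 1) by ring.
  apply (is_derive_Rpower_comp (fun s => Y s j - Y s i)). apply is_derive_diff; auto. lra. Qed.

Lemma E2_deriv m chi q (Y : R -> nat -> R) V t :
 (forall i, (1 <= i <= S q)%nat -> is_derive (fun s => Y s i) t (V i)) -> incr (S q) (Y t) ->
 is_derive (fun s => E2f m chi q (Y s)) t ((1 - m) * sum1 (S q) (fun i => flow_rhs m chi (S q) (Y t) i * V i)).
Proof. intros HV HZ. rewrite <- total_alg by auto. unfold E2f.
  apply is_derive_diff.
  - apply (is_derive_sum1 q (fun s i => Rpower (Y s (S i) - Y s i) (1 - m))). intros i Hi.
    apply is_derive_Rp_diff; try apply HV; try lia. apply HZ; lia.
  - apply is_derive_scal.
    apply (is_derive_sum1 (S q) (fun s i => sum1 (S q) (fun j => Pt m (Y s) i j))). intros i Hi.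
    apply (is_derive_sum1 (S q) (fun s j => Pt m (Y s) i j)). intros j Hj.
    unfold Pt, dPt. destruct (Nat.ltb_spec i j).
    + apply is_derive_Rp_diff; try apply HV; try lia. apply (incr_lt (S q)); auto; lia.
    + destruct (Nat.ltb_spec j i).
      * apply is_derive_Rp_diff; try apply HV; try lia. apply (incr_lt (S q)); auto; lia.
      * apply (is_derive_const (V:=R_NormedModule)).
Qed.


Lemma Rp_le_eta m eta d : 0 < m -> 0 < eta -> eta <= d -> Rpower d (- m) <= Rpower eta (- m).
Proof. intros. apply Rpower_antimono; lra. Qed.

Lemma local_bound m chi N l r (Z : nat -> R) eta i : 0 < m -> 0 < chi -> 0 < eta ->
  (1 <= l)%nat -> (l <= r)%nat -> (r <= N)%nat -> incr N Z ->
  ((1 < l)%nat -> eta <= Z l - Z (l - 1)%nat) -> ((r < N)%nat -> eta <= Z (S r) - Z r) ->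
  (1 <= i <= S (r - l))%nat ->
  Rabs (flow_rhs m chi N Z (l - 1 + i) - flow_rhs m chi (S (r - l)) (fun j => Z (l - 1 + j)%nat) i)
   <= 2 * Rpower eta (- m) + 2 * chi * (INR N * Rpower eta (- m)).
Proof. intros Hm Hchi Heta Hl Hlr HrN HZ HL HR Hi.
  set (q := (r - l)%nat). set (n := (l - 1 + i)%nat). set (Re := Rpower eta (- m)).
  assert (HRe : 0 < Re) by apply Rpower_pos.
  unfold flow_rhs.
  set (AN := if Nat.eq_dec n N then 0 else - Rpower (Z (S n) - Z n) (- m)).
  set (Ap := if Nat.eq_dec i (S q) then 0 else - Rpower (Z (l - 1 + S i)%nat - Z (l - 1 + i)%nat) (- m)).
  set (BN := if Nat.eq_dec n 1 then 0 else Rpower (Z n - Z (pred n)) (- m)).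
  set (Bp := if Nat.eq_dec i 1 then 0 else Rpower (Z (l - 1 + i)%nat - Z (l - 1 + pred i)%nat) (- m)).
  set (f := fun j => if Nat.ltb n j then Rpower (Rabs (Z j - Z n)) (- m)
      else if Nat.ltb j n then - Rpower (Rabs (Z j - Z n)) (- m) else 0).
  set (fp := fun j => if Nat.ltb i j then Rpower (Rabs (Z (l - 1 + j)%nat - Z (l - 1 + i)%nat)) (- m)
      else if Nat.ltb j i then - Rpower (Rabs (Z (l - 1 + j)%nat - Z (l - 1 + i)%nat)) (- m) else 0).
  change (Rabs (AN + BN + 2 * chi * sum1 N f - (Ap + Bp + 2 * chi * sum1 (S q) fp)) <= 2 * Re + 2 * chi * (INR N * Re)).
  assert (HA : Rabs (AN - Ap) <= Re).
  { unfold AN, Ap. destruct (Nat.eq_dec i (S q)) as [e|e].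
    - destruct (Nat.eq_dec n N). rewrite Rminus_0_r, Rabs_R0; lra.
      assert (n = r) by (unfold n, q in *; lia). rewrite H.
      rewrite Rminus_0_r, Rabs_Ropp, Rabs_right by (left; apply Rpower_pos).
      apply Rp_le_eta; auto. apply HR. lia.
    - destruct (Nat.eq_dec n N). unfold n, q in *; lia.
      replace (l - 1 + S i)%nat with (S n) by (unfold n; lia). unfold n.
      rewrite Rminus_diag, Rabs_R0; lra. }
  assert (HB : Rabs (BN - Bp) <= Re).
  { unfold BN, Bp. destruct (Nat.eq_dec i 1) as [e|e].
    - destruct (Nat.eq_dec n 1). rewrite Rminus_0_r, Rabs_R0; lra.
      assert (n = l) by (unfold n in *; lia). rewrite H.
      rewrite Rminus_0_r, Rabs_right by (left; apply Rpower_pos).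
      apply Rp_le_eta; auto. replace (pred l) with (l - 1)%nat by lia. apply HL. unfold n in *; lia.
    - destruct (Nat.eq_dec n 1). unfold n in *; lia.
      replace (l - 1 + pred i)%nat with (pred n) by (unfold n; lia). unfold n.
      rewrite Rminus_diag, Rabs_R0; lra. }
  assert (HS : Rabs (sum1 N f - sum1 (S q) fp) <= INR N * Re).
  { replace N with ((l - 1) + (S q + (N - r)))%nat at 1 by (unfold q; lia).
    rewrite sum1_split, sum1_split.
    replace (sum1 (S q) (fun i0 => f (l - 1 + i0)%nat)) with (sum1 (S q) fp).
    2:{ apply sum1_ext; intros j Hj. unfold f, fp, n.
        destruct (Nat.ltb_spec (l - 1 + i) (l - 1 + j)); destruct (Nat.ltb_spec i j); try lia; auto.
        destruct (Nat.ltb_spec (l - 1 + j) (l - 1 + i)); destruct (Nat.ltb_spec j i); try lia; auto. }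
    replace (sum1 (l - 1) f + (sum1 (S q) fp + sum1 (N - r) (fun i0 => f (l - 1 + (S q + i0))%nat)) - sum1 (S q) fp)
      with (sum1 (l - 1) f + sum1 (N - r) (fun i0 => f (l - 1 + (S q + i0))%nat)) by ring.
    eapply Rle_trans; [apply Rabs_triang|].
    assert (H1 : Rabs (sum1 (l - 1) f) <= INR (l - 1) * Re).
    { apply sum1_abs_le; intros j Hj. unfold f.
      destruct (Nat.ltb_spec n j). unfold n in *; lia.
      destruct (Nat.ltb_spec j n); [|unfold n in *; lia].
      rewrite Rabs_Ropp, Rabs_right by (left; apply Rpower_pos). apply Rp_le_eta; auto.
      assert (Z j <= Z (l - 1)%nat) by (apply (incr_le N); auto; lia).
      assert (Z l <= Z n) by (apply (incr_le N); auto; unfold n in *; lia).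
      assert (eta <= Z l - Z (l - 1)%nat) by (apply HL; lia).
      rewrite Rabs_left1 by lra. lra. }
    assert (H2 : Rabs (sum1 (N - r) (fun i0 => f (l - 1 + (S q + i0))%nat)) <= INR (N - r) * Re).
    { apply sum1_abs_le; intros j Hj. unfold f.
      replace (l - 1 + (S q + j))%nat with (r + j)%nat by (unfold q; lia).
      destruct (Nat.ltb_spec n (r + j)); [|unfold n, q in *; lia].
      rewrite Rabs_right by (left; apply Rpower_pos). apply Rp_le_eta; auto.
      assert (Z (S r) <= Z (r + j)%nat) by (apply (incr_le N); auto; lia).
      assert (Z n <= Z r) by (apply (incr_le N); auto; unfold n, q in *; lia).
      assert (eta <= Z (S r) - Z r) by (apply HR; lia).
      rewrite Rabs_right by lra. lra. }
    assert (INR (l - 1) + INR (N - r) <= INR N) by (rewrite <- plus_INR; apply le_INR; lia).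
    nra. }
  replace (AN + BN + 2 * chi * sum1 N f - (Ap + Bp + 2 * chi * sum1 (S q) fp))
    with ((AN - Ap) + (BN - Bp) + (2 * chi) * (sum1 N f - sum1 (S q) fp)) by ring.
  eapply Rle_trans; [apply Rabs_triang|]. eapply Rle_trans; [apply Rplus_le_compat_r, Rabs_triang|].
  rewrite Rabs_mult, (Rabs_right (2 * chi)) by lra. nra.
Qed.


Lemma not_liminf_bound (g : R -> R) T : (forall t, 0 <= t < T -> 0 < g t) -> ~ liminf_left_eq0 g T ->
  exists e d, 0 < e /\ 0 < d /\ forall t, 0 <= t < T -> T - d < t -> e <= g t.
Proof. intros Hpos Hn. apply NNPP; intro H. apply Hn. split.
  - intros eps delta He Hd. apply NNPP; intro H2. apply H. exists eps, delta. repeat split; auto.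
    intros t Ht Htd. apply Rnot_lt_le. intro Hlt. apply H2. exists t; auto.
  - intros eps He. exists 1. split; [lra|]. intros t Ht _. specialize (Hpos t Ht). lra.
Qed.

Lemma boundary m chi N T X l r : 0 < T -> is_solution m chi N T X -> weak_blowup_set N X T l r ->
  exists eta t0, 0 < eta /\ 0 <= t0 < T /\ forall t, t0 < t < T ->
   ((1 < l)%nat -> eta <= X t l - X t (l - 1)%nat) /\ ((r < N)%nat -> eta <= X t (S r) - X t r).
Proof. intros HT [Hin _] [[Hl [Hlr [HrN Hg]]] Hmax].
  assert (HL : (1 < l)%nat -> exists e d, 0 < e /\ 0 < d /\ forall t, 0 <= t < T -> T - d < t -> e <= X t l - X t (l - 1)%nat).
  { intros H1. apply (not_liminf_bound (fun t => X t l - X t (l - 1)%nat)).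
    - intros t Ht. destruct (Hin t Ht) as [Hinc _]. specialize (Hinc (l - 1)%nat ltac:(lia) ltac:(lia)).
      replace (S (l - 1)) with l in Hinc by lia. lra.
    - intro Hli. assert (Hw : weakly_blows_up N X T (l - 1) r).
      { split; [lia|split;[lia|split;[lia|]]]. intros i0 Hi1 Hi2. destruct (Nat.eq_dec i0 (l - 1)).
        + subst i0. replace (S (l - 1)) with l by lia. exact Hli.
        + apply Hg; lia. }
      destruct (Hmax _ _ Hw ltac:(lia) ltac:(lia)). lia. }
  assert (HR : (r < N)%nat -> exists e d, 0 < e /\ 0 < d /\ forall t, 0 <= t < T -> T - d < t -> e <= X t (S r) - X t r).
  { intros H1. apply (not_liminf_bound (fun t => X t (S r) - X t r)).
    - intros t Ht. destruct (Hin t Ht) as [Hinc _]. specialize (Hinc r ltac:(lia) ltac:(lia)). lra.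
    - intro Hli. assert (Hw : weakly_blows_up N X T l (S r)).
      { split; [lia|split;[lia|split;[lia|]]]. intros i0 Hi1 Hi2. destruct (Nat.eq_dec i0 r).
        + subst i0. exact Hli.
        + apply Hg; lia. }
      destruct (Hmax _ _ Hw ltac:(lia) ltac:(lia)). lia. }
  assert (HL' : exists e d, 0 < e /\ 0 < d /\ forall t, 0 <= t < T -> T - d < t -> (1 < l)%nat -> e <= X t l - X t (l - 1)%nat).
  { destruct (Compare_dec.lt_dec 1 l) as [h|h].
    - destruct (HL h) as (e & d & ? & ? & H). exists e, d; repeat split; auto.
    - exists 1, 1; repeat split; try lra. intros; lia. }
  assert (HR' : exists e d, 0 < e /\ 0 < d /\ forall t, 0 <= t < T -> T - d < t -> (r < N)%nat -> e <= X t (S r) - X t r).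
  { destruct (Compare_dec.lt_dec r N) as [h|h].
    - destruct (HR h) as (e & d & ? & ? & H). exists e, d; repeat split; auto.
    - exists 1, 1; repeat split; try lra. intros; lia. }
  destruct HL' as (e1 & d1 & He1 & Hd1 & H1). destruct HR' as (e2 & d2 & He2 & Hd2 & H2).
  exists (Rmin e1 e2), (Rmax 0 (Rmax (T - d1) (T - d2))).
  split; [apply Rmin_pos; auto|]. split.
  { split. apply Rmax_l. apply Rmax_lub_lt; [lra|]. apply Rmax_lub_lt; lra. }
  intros t [Ht1 Ht2].
  assert (0 <= t) by (eapply Rle_trans; [apply Rmax_l|]; left; exact Ht1).
  assert (T - d1 < t) by (eapply Rle_lt_trans; [|exact Ht1]; eapply Rle_trans; [|apply Rmax_r]; apply Rmax_l).
  assert (T - d2 < t) by (eapply Rle_lt_trans; [|exact Ht1]; eapply Rle_trans; [|apply Rmax_r]; apply Rmax_r).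
  split; intros.
  - eapply Rle_trans; [apply Rmin_l|]. apply H1; auto; lra.
  - eapply Rle_trans; [apply Rmin_r|]. apply H2; auto; lra.
Qed.


Theorem proposition5p3 (m chi : R) (N k : nat) (T : R) (X : R -> nat -> R) (l r : nat) :
  1 < m -> (2 <= N)%nat -> 0 < chi -> (2 <= k)%nat -> chi < C_const m k ->
  0 < T -> is_solution m chi N T X ->
  weak_blowup_set N X T l r -> (l < r)%nat ->
  (k + 1 <= r - l + 1)%nat.
Proof.
  intros Hm HN Hchi Hk Hck HT Hsol Hwb Hlr.
  destruct (Compare_dec.le_lt_dec (k + 1) (r - l + 1)) as [h|h]; [exact h|exfalso].
  destruct (boundary m chi N T X l r HT Hsol Hwb) as (eta & t0 & Heta & Ht0 & Hbd).
  destruct Hsol as [Hin [_ Hder]].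
  destruct Hwb as [[Hl [Hlr' [HrN Hg]]] _].
  assert (Hc : exists c, C_inv m k = Finite c /\ 0 < c /\ chi * c < 1).
  { unfold C_const in Hck. destruct (C_inv m k) as [c| |]; simpl in Hck.
    - exists c. destruct (Rtotal_order c 0) as [hc|[hc|hc]].
      + pose proof (Rinv_lt_0_compat c hc); lra.
      + subst; rewrite Rinv_0 in Hck; lra.
      + split; auto. split; auto. apply (Rmult_lt_compat_r c) in Hck; auto.
        rewrite Rinv_l in Hck; lra.
    - rewrite Rinv_0 in Hck; lra.
    - rewrite Rinv_0 in Hck; lra. }
  destruct Hc as (c & Hc & Hc0 & Hcc).
  set (q := (r - l)%nat).
  set (Y := fun s i => X s (l - 1 + i)%nat).
  assert (HincN : forall t, 0 <= t < T -> incr N (X t)) by (intros t Ht; exact (proj1 (Hin t Ht))).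
  assert (HincY : forall t, 0 <= t < T -> incr (S q) (Y t)).
  { intros t Ht i H1 H2. unfold Y. replace (l - 1 + S i)%nat with (S (l - 1 + i)) by lia.
    apply HincN; auto; unfold q in *; lia. }
  set (Bd := 2 * Rpower eta (- m) + 2 * chi * (INR N * Rpower eta (- m))).
  set (K := (m - 1) * INR (S q) * (Bd * Bd) / 4).
  set (E := fun s => E2f m chi q (Y s)).
  set (dE := fun t => (1 - m) * sum1 (S q) (fun i => flow_rhs m chi (S q) (Y t) i * flow_rhs m chi N (X t) (l - 1 + i))).
  assert (HdE : forall t, t0 < t < T -> is_derive E t (dE t)).
  { intros t Ht. apply (E2_deriv m chi q Y (fun i => flow_rhs m chi N (X t) (l - 1 + i)) t).
    - intros i Hi. unfold Y. apply Hder. unfold q in *; lia. lra.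
    - apply HincY; lra. }
  assert (HdEle : forall t, t0 < t < T -> dE t <= K).
  { intros t Ht. unfold dE, K.
    assert (Hs : INR (S q) * (- (Bd * Bd) / 4) <= sum1 (S q) (fun i => flow_rhs m chi (S q) (Y t) i * flow_rhs m chi N (X t) (l - 1 + i))).
    { rewrite <- sum1_const. apply sum1_le; intros i Hi.
      destruct (Hbd t Ht) as [HL HR].
      assert (Hb := local_bound m chi N l r (X t) eta i ltac:(lra) Hchi Heta Hl Hlr' HrN
                 (HincN t ltac:(lra)) HL HR Hi).
      fold Bd in Hb. change (fun j => X t (l - 1 + j)%nat) with (Y t) in Hb. fold q in Hb.
      revert Hb. generalize (flow_rhs m chi (S q) (Y t) i) (flow_rhs m chi N (X t) (l - 1 + i)).
      intros a b Hab.
      assert (Hsq : (b - a) * (b - a) <= Bd * Bd).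
      { revert Hab. unfold Rabs; destruct Rcase_abs; intros; nra. }
      assert (0 <= (2 * a + (b - a)) * (2 * a + (b - a))) by apply Rle_0_sqr. nra. }
    assert (0 <= INR (S q)) by apply pos_INR. nra. }
  set (t1 := (t0 + T) / 2).
  assert (HK : 0 <= K).
  { unfold K. assert (0 <= INR (S q)) by apply pos_INR. assert (0 <= Bd * Bd) by nra.
    apply Rmult_le_pos; [|lra]. apply Rmult_le_pos; [|lra]. apply Rmult_le_pos; lra. }
  assert (Hup : forall t, t1 <= t < T -> E t <= E t1 + K * T).
  { intros t Ht. destruct (Req_dec t t1) as [e|e].
    - subst t. nra.
    - destruct (MVT_gen E t1 t dE) as [x [Hx Heq]].
      + intros x Hx. rewrite Rmin_left, Rmax_right in Hx by lra. apply HdE. unfold t1 in *; lra.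
      + intros x Hx. rewrite Rmin_left, Rmax_right in Hx by lra. apply continuity_pt_filterlim.
        apply (ex_derive_continuous (K:=R_AbsRing) (V:=R_NormedModule)). exists (dE x). apply HdE. unfold t1 in *; lra.
      + rewrite Rmin_left, Rmax_right in Hx by lra.
        assert (dE x <= K) by (apply HdEle; unfold t1 in *; lra).
        assert (t - t1 <= T) by (unfold t1 in *; lra). nra. }
  assert (Hlow : forall t, t1 <= t < T -> (1 - chi * c) * Rpower (X t (S l) - X t l) (1 - m) <= E t).
  { intros t Ht. assert (Ht' : 0 <= t < T) by (unfold t1 in *; lra).
    unfold E. rewrite <- E2f_eq by (apply HincY; auto).
    assert (Hst := static_ineq m k (S q) c (Y t) Hm Hc Hc0 ltac:(unfold q; lia) ltac:(unfold q in *; lia) (HincY t Ht')).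
    assert (Hden : Rpower (X t (S l) - X t l) (1 - m) <= C_den m (S q) (Y t)).
    { unfold C_den. replace (S q - 1)%nat with (S (q - 1)) by (unfold q; lia). rewrite sum1_shift.
      assert (0 <= sum1 (q - 1) (fun i => Rpower (Y t (S (S i)) - Y t (S i)) (1 - m))).
      { apply sum1_nonneg; intros; left; apply Rpower_pos. }
      unfold Y at 1 2. replace (l - 1 + 2)%nat with (S l) by lia. replace (l - 1 + 1)%nat with l by lia. lra. }
    assert (0 < 1 - chi * c) by lra. nra. }
  assert (Hgl := proj1 (Hg l ltac:(lia) Hlr)).
  set (Mx := Rabs (E t1) + K * T).
  set (Zb := Mx / (1 - chi * c) + 1).
  assert (HMx : 0 <= Mx) by (unfold Mx; pose proof (Rabs_pos (E t1)); nra).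
  assert (HZb : 0 < Zb) by (unfold Zb; assert (0 < 1 - chi * c) by lra;
                             assert (0 <= Mx / (1 - chi * c)) by (apply Rdiv_le_0_compat; lra); lra).
  set (eps := exp (ln Zb / (1 - m))).
  destruct (Hgl eps (T - t1) (exp_pos _) ltac:(unfold t1 in *; lra)) as [t [Ht [Htd Hlt]]].
  cbv beta in Hlt.
  assert (Hpos : 0 < X t (S l) - X t l) by (assert (X t l < X t (S l)) by (apply (HincN t Ht); lia); lra).
  assert (Hpw : Rpower eps (1 - m) < Rpower (X t (S l) - X t l) (1 - m)).
  { apply Rpower_antimono_strict; lra. }
  unfold eps in Hpw. rewrite Rpower_exp in Hpw.
  replace ((1 - m) * (ln Zb / (1 - m))) with (ln Zb) in Hpw by (field; lra).
  rewrite exp_ln in Hpw by auto.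
  assert (Ht1 : t1 <= t < T) by lra.
  assert (H1 := Hup t Ht1). assert (H2 := Hlow t Ht1).
  assert (E t1 <= Rabs (E t1)) by apply Rle_abs.
  assert (Hz : (1 - chi * c) * Zb = Mx + (1 - chi * c)) by (unfold Zb; field; lra).
  assert (0 < 1 - chi * c) by lra.
  assert ((1 - chi * c) * Zb < (1 - chi * c) * Rpower (X t (S l) - X t l) (1 - m)) by (apply Rmult_lt_compat_l; lra).
  unfold Mx in Hz. lra.
Qed.
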